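(* Let $R$, $G$, $*$, $\sigma$ and $\mathcal{S}$ be as in the context, and suppose $\mathcal{S}$ is anticommutative. Let $x,y\in G\setminus G_*$ with $\sigma(y)\neq -1$. Then one of the following holds: - (i) $xy=yx=x^*y^*=y^*x^*$ and $2(1+\sigma(xy))=0=2(\sigma(x)+\sigma(y))$; - (ii) $xy=yx^*=y^*x=x^*y^*$ and $1+\sigma(x)+\sigma(y)+\sigma(xy)=0$; - (iii) $xy=x^*y^*\neq yx^*=y^*x$, $\sigma(xy)=-1$ and $\sigma(x)=-\sigma(y)$; - (iv) $xy=yx^*\neq x^*y^*=y^*x$ and $\sigma(x)=-1$.
   Context: Throughout, $R$ is a commutative ring with unity with $\operatorname{char}(R)\neq 2$, and $\mathcal{U}(R)$ is its unit group. $G$ is a group with an involution $*$, i.e. a map $x\mapsto x^*$ with $(xy)^*=y^*x^*$ and $(x^* )^*=x$. The map $\sigma:G\to\mathcal{U}(R)$ is a nontrivial group homomorphism with kernel $N=\ker\sigma$, and it is compatible with $*$: $xx^*\in N$ for all $x\in G$. The group ring $RG$ carries the involution $\left(\sum_{x\in G}\alpha_x x\right)^{\sigma*}=\sum_{x\in G}\sigma(x)\alpha_x x^*$. Write $G_*=\{x\in G: x^*=x\}$ and $N_*=G_*\cap N$. Let $\mathcal{S}$ be the $R$-submodule of $RG$ spanned by the union of the following three sets: - $2\mathcal{S}_1=\{2x: x\in N_*\}$; - $\mathcal{S}_2=\{\alpha x: x\in G_*\setminus N,\ \alpha\in R,\ \alpha(1-\sigma(x))=0\}$; - $\mathcal{S}_3=\{x+\sigma(x)x^*: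 x\in G\setminus G_*\}$. $\mathcal{S}$ is called anticommutative if $ab+ba=0$ for all $a,b\in\mathcal{S}$. *)

(* Defs.v *)
From HB Require Import structures.
From mathcomp Require Import all_boot all_order all_algebra.
Set Implicit Arguments. Unset Strict Implicit. Unset Printing Implicit Defensive.
Import GRing.Theory.
Local Open Scope ring_scope.

(* Elements of the group ring RG (G any group, possibly infinite) are
   represented by finite formal sums: lists of pairs (coefficient, group
   element).  Two representatives denote the same element of RG iff their
   coefficient functions [gcoef] agree. *)
Section GroupRing.
Variables (R : comNzRingType) (G : groupType).

Definition gelt := seq (R * G).

Definition gcoef (a : gelt) (g : G) : R := \sum_(p <- a | p.2 == g) p.1.

Definition gadd (a b : gelt) : gelt := a ++ b.

Definition gmul (a b : gelt) : gelt :=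
  [seq (p.1 * q.1, (p.2 * q.2)%g) | p <- a, q <- b].

Definition gscale (r : R) (a : gelt) : gelt := [seq (r * p.1, p.2) | p <- a].

Definition Gsym (star : G -> G) (x : G) : Prop := star x = x.
Definition inN (sigma : G -> R) (x : G) : Prop := sigma x = 1.

Definition S_gen (star : G -> G) (sigma : G -> R) (s : gelt) : Prop :=
  (exists x, Gsym star x /\ inN sigma x /\ s = [:: (2%:R, x)])
  \/ (exists x (al : R), Gsym star x /\ ~ inN sigma x /\
        al * (1 - sigma x) = 0 /\ s = [:: (al, x)])
  \/ (exists x, ~ Gsym star x /\ s = [:: (1, x); (sigma x, star x)]).

Definition in_S (star : G -> G) (sigma : G -> R) (a : gelt) : Prop :=
  exists ls : seq (R * gelt),
    (forall p, p \in ls -> S_gen star sigma p.2) /\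
    (forall g, gcoef a g = gcoef (flatten [seq gscale p.1 p.2 | p <- ls]) g).

Definition S_anticomm (star : G -> G) (sigma : G -> R) : Prop :=
  forall a b, in_S star sigma a -> in_S star sigma b ->
    forall g, gcoef (gadd (gmul a b) (gmul b a)) g = 0.

End GroupRing.

(* Main.v *)
Require Import Defs.
From HB Require Import structures.
From mathcomp Require Import all_boot all_order all_algebra.
From mathcomp Require Import ring.
Import GRing.Theory.
Local Open Scope ring_scope.

Section Pf.
Variables (R : comNzRingType) (G : groupType) (star : G -> G) (sigma : G -> R).
Hypothesis hchar : (2%:R : R) != 0.
Hypothesis hstarM : forall x y : G, star (x * y)%g = (star y * star x)%g.
Hypothesis hstarK : forall x : G, star (star x) = x.
Hypothesis hsigM : forall x y : G, sigma (x * y)%g = sigma x * sigma y.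
Hypothesis hsigU : forall x : G, exists u : R, sigma x * u = 1.
Hypothesis hcompat : forall x : G, sigma (x * star x)%g = 1.
Hypothesis hS : S_anticomm star sigma.

Lemma gcoef_cons (r : R) (h : G) l g :
  gcoef ((r, h) :: l) g = (if h == g then r else 0) + gcoef l g.
Proof. by rewrite /gcoef big_cons /=; case: (h == g); rewrite ?add0r. Qed.

Lemma gcoef_nil g : gcoef ([::] : gelt R G) g = 0.
Proof. by rewrite /gcoef big_nil. Qed.

Lemma gscale1 (s : gelt R G) : gscale 1 s = s.
Proof. by elim: s => //= [[r h] s ->]; rewrite mul1r. Qed.

Lemma inS_gen s : S_gen star sigma s -> in_S star sigma s.
Proof.
move=> hs; exists [:: (1, s)]; split.
  by move=> p; rewrite inE => /eqP ->.
by move=> g; rewrite /= gscale1 cats0.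
Qed.

Lemma anti s t : S_gen star sigma s -> S_gen star sigma t ->
  forall g, gcoef (gadd (gmul s t) (gmul t s)) g = 0.
Proof. by move=> hs ht; apply: hS; apply: inS_gen. Qed.

Lemma gen3 x : star x <> x -> S_gen star sigma [:: (1, x); (sigma x, star x)].
Proof. by move=> hx; right; right; exists x. Qed.

Lemma gen1 w : star w = w -> sigma w = 1 -> S_gen star sigma [:: (2%:R, w)].
Proof. by move=> h1 h2; left; exists w. Qed.

Lemma gen2 w : star w = w -> sigma w = -1 -> (2%:R : R) * 2%:R = 0 ->
  S_gen star sigma [:: (2%:R, w)].
Proof.
move=> h1 h2 h4; right; left; exists w, 2%:R.
have h22 : 1 - sigma w = 2%:R by rewrite h2 opprK mulr2n.
split => //; split; last by split => //; rewrite h22.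
rewrite /inN h2 => h; move/eqP: hchar; apply.
by rewrite mulr2n -{1}h addNr.
Qed.

Lemma ucancel x (c : R) : c * sigma x = 0 -> c = 0.
Proof.
by case: (hsigU x) => u hu h; rewrite -[c]mulr1 -hu mulrA h mul0r.
Qed.


Arguments anti {s t}.
Arguments gen3 {x}.
Arguments gen1 {w}.
Arguments gen2 {w}.

Ltac simp_eqs H :=
  repeat (rewrite ?eqxx in H; match type of H with
  | context [?a == ?b] =>
     match goal with
     | h : a = b |- _ => rewrite (introT eqP h) in H
     | h : b = a |- _ => rewrite (introT eqP (esym h)) in H
     | h : a <> b |- _ => rewrite (introF eqP h) in H
     | h : b <> a |- _ => rewrite (introF eqP (fun e => h (esym e))) in H
     end end);
  rewrite ?eqxx ?mul1r ?mulr1 ?add0r ?addr0 in H.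

Lemma two_neq0' : (2%:R : R) <> 0.
Proof. by move/eqP; rewrite (negbTE hchar). Qed.

Lemma F1 x : star x <> x ->
  [/\ (star x * star x)%g = (x * x)%g, (star x * x)%g = (x * star x)%g
    & (2%:R : R) * 2%:R = 0].
Proof.
move=> hx.
have E g := anti (gen3 hx) (gen3 hx) g.
have n1 : (x * x)%g <> (x * star x)%g by move/mulgI => h; apply: hx; rewrite -h.
have n2 : (star x * star x)%g <> (x * star x)%g by move/mulIg.
have c : (star x * x)%g = (x * star x)%g.
  case: ((star x * x)%g =P (x * star x)%g) => // c; exfalso.
  have := E (x * star x)%g; rewrite /gadd /gmul /= !gcoef_cons gcoef_nil => H.
  simp_eqs H.
  apply: two_neq0'; apply: (ucancel x).
  by apply: (etrans _ H); ring.
have h4 : (2%:R : R) * 2%:R = 0.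
  have := E (x * star x)%g; rewrite /gadd /gmul /= !gcoef_cons gcoef_nil => H.
  simp_eqs H.
  apply: (ucancel x).
  by apply: (etrans _ H); ring.
split => //.
case: ((star x * star x)%g =P (x * x)%g) => // c2; exfalso.
have n3 : (star x * x)%g <> (x * x)%g by rewrite c => /esym.
have := E (x * x)%g; rewrite /gadd /gmul /= !gcoef_cons gcoef_nil => H.
simp_eqs H.
apply: two_neq0'.
by apply: (etrans _ H); ring.
Qed.

Arguments F1 {x}.

Lemma sig_neq0 x : sigma x <> 0.
Proof.
case: (hsigU x) => u hu h; move: hu; rewrite h mul0r => /eqP.
by rewrite eq_sym oner_eq0.
Qed.

Lemma one_neq0' : (1 : R) <> 0.
Proof. by move/eqP; rewrite oner_eq0. Qed.

Lemma main x y (hx : star x <> x) (hy : star y <> y) (hsy : sigma y <> -1) :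
  [/\ (x * y)%g = (y * x)%g, (y * x)%g = (star x * star y)%g,
      (star x * star y)%g = (star y * star x)%g,
      2%:R * (1 + sigma (x * y)%g) = 0 & 2%:R * (sigma x + sigma y) = 0]
  \/ [/\ (x * y)%g = (y * star x)%g, (y * star x)%g = (star y * x)%g,
        (star y * x)%g = (star x * star y)%g &
        1 + sigma x + sigma y + sigma (x * y)%g = 0]
  \/ [/\ (x * y)%g = (star x * star y)%g, (star x * star y)%g <> (y * star x)%g,
        (y * star x)%g = (star y * x)%g, sigma (x * y)%g = -1 &
        sigma x = - sigma y]
  \/ [/\ (x * y)%g = (y * star x)%g, (y * star x)%g <> (star x * star y)%g,
        (star x * star y)%g = (star y * x)%g & sigma x = -1].
Proof.
have [hxx hx2 h4] := F1 hx.
have [hyy hy2 _] := F1 hy.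
have E g := anti (gen3 hx) (gen3 hy) g.
have nA12 : (x * y)%g <> (x * star y)%g by move/mulgI => h; apply: hy; rewrite -h.
have nA13 : (x * y)%g <> (star x * y)%g by move/mulIg => h; apply: hx; rewrite -h.
have nA24 : (x * star y)%g <> (star x * star y)%g by move/mulIg => h; apply: hx; rewrite -h.
have nA34 : (star x * y)%g <> (star x * star y)%g by move/mulgI => h; apply: hy; rewrite -h.
have nB12 : (y * x)%g <> (y * star x)%g by move/mulgI => h; apply: hx; rewrite -h.
have nB13 : (y * x)%g <> (star y * x)%g by move/mulIg => h; apply: hy; rewrite -h.
have nB24 : (y * star x)%g <> (star y * star x)%g by move/mulIg => h; apply: hy; rewrite -h.
have nB34 : (star y * x)%g <> (star y * star x)%g by move/mulgI => h; apply: hx; rewrite -h.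
have hp : sigma (x * y)%g = sigma x * sigma y by apply: hsigM.
case: ((x * y)%g =P (star x * star y)%g) => [e14|ne14].
  have eB14 : (star y * star x)%g = (y * x)%g.
    by have := congr1 star e14; rewrite !hstarM !hstarK.
  have eA23 : (x * star y)%g = (star x * y)%g.
    have : (star x * (x * y))%g = (star x * (star x * star y))%g by rewrite e14.
    by rewrite !mulgA hxx hx2 -!mulgA => /mulgI /esym.
  have eB23 : (y * star x)%g = (star y * x)%g.
    have : (y * x * star x)%g = (star y * star x * star x)%g by rewrite eB14.
    by rewrite -!mulgA hxx -hx2 !mulgA => /mulIg.
  case: ((y * x)%g =P (x * y)%g) => [c|nc].
    have n1 : (y * star x)%g <> (x * y)%g by rewrite -c => /esym.
    have n2 : (star y * x)%g <> (x * y)%g by rewrite -eB23.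
    have n3 : (star y * star x)%g = (x * y)%g by rewrite eB14.
    have := E (x * y)%g; rewrite /gadd /gmul /= !gcoef_cons gcoef_nil => H.
    simp_eqs H.
    have n4 : (y * x)%g <> (x * star y)%g by rewrite c.
    have n5 : (star y * star x)%g <> (x * star y)%g by rewrite n3.
    have := E (x * star y)%g; rewrite /gadd /gmul /= !gcoef_cons gcoef_nil => H2.
    simp_eqs H2.
    left; split; try congruence.
      by rewrite hp; apply: (etrans _ H); ring.
    case: ((y * star x)%g =P (x * star y)%g) => [f|nf].
      have f' : (star y * x)%g = (x * star y)%g by rewrite -eB23.
      simp_eqs H2.
      by apply: (etrans _ H2); ring.
    have nf' : (star y * x)%g <> (x * star y)%g by rewrite -eB23.
    simp_eqs H2.
    have -> : sigma x + sigma y = 0 by apply: (etrans _ H2); ring.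
    by rewrite mulr0.
  case: ((y * star x)%g =P (x * y)%g) => [d|nd].
    have n3 : (star y * x)%g = (x * y)%g by rewrite -eB23.
    have n4 : (star y * star x)%g <> (x * y)%g by rewrite eB14.
    have := E (x * y)%g; rewrite /gadd /gmul /= !gcoef_cons gcoef_nil => H.
    simp_eqs H.
    right; left; split; try congruence.
    by rewrite hp; apply: (etrans _ H); ring.
  have n3 : (star y * x)%g <> (x * y)%g by rewrite -eB23.
  have n4 : (star y * star x)%g <> (x * y)%g by rewrite eB14.
  have := E (x * y)%g; rewrite /gadd /gmul /= !gcoef_cons gcoef_nil => H.
  simp_eqs H.
  case: ((x * star y)%g =P (y * star x)%g) => [f|nf].
    exfalso; apply: nc.
    have : (x * star y * star x)%g = (y * star x * star x)%g by rewrite f.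
    by rewrite -!mulgA eB14 hxx !mulgA => /mulIg /esym.
  have n5 : (star x * y)%g <> (y * star x)%g by rewrite -eA23.
  have n6 : (star x * star y)%g <> (y * star x)%g by rewrite -e14 => /esym.
  have := E (y * star x)%g; rewrite /gadd /gmul /= !gcoef_cons gcoef_nil => H2.
  simp_eqs H2.
  right; right; left; split; try congruence.
    apply/eqP; rewrite -addr_eq0; apply/eqP; rewrite hp.
    by apply: (etrans _ H); ring.
  apply/eqP; rewrite -addr_eq0; apply/eqP.
  by apply: (etrans _ H2); ring.
have neB14 : (y * x)%g <> (star y * star x)%g.
  move=> e; apply: ne14.
  by have := congr1 star e; rewrite !hstarM !hstarK => /esym.
have neA23 : (x * star y)%g <> (star x * y)%g.
  move=> e; apply: ne14.
  have : (x * star y * star y)%g = (star x * y * star y)%g by rewrite e.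
  by rewrite -!mulgA hyy -hy2 !mulgA => /mulIg.
have neB23 : (y * star x)%g <> (star y * x)%g.
  move=> e; apply: neA23.
  by have := congr1 star e; rewrite !hstarM !hstarK.
case: ((y * x)%g =P (x * y)%g) => [c1|nc1].
  have n1 : (y * star x)%g <> (x * y)%g by rewrite -c1 => /esym.
  have n2 : (star y * x)%g <> (x * y)%g by rewrite -c1 => /esym.
  have n3 : (star y * star x)%g <> (x * y)%g by rewrite -c1 => /esym.
  have := E (x * y)%g; rewrite /gadd /gmul /= !gcoef_cons gcoef_nil => H.
  simp_eqs H.
  exfalso; apply: two_neq0'; apply: (etrans _ H); ring.
case: ((y * star x)%g =P (x * y)%g) => [c2|nc2].
  have n2 : (star y * x)%g <> (x * y)%g by rewrite -c2 => /esym.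
  have n3 : (star y * star x)%g <> (x * y)%g by rewrite -c2 => /esym.
  have := E (x * y)%g; rewrite /gadd /gmul /= !gcoef_cons gcoef_nil => H.
  simp_eqs H.
  have eA2B4 : (x * star y)%g = (star y * star x)%g.
    by have := congr1 star c2; rewrite !hstarM !hstarK.
  have m1 : (y * star x)%g <> (star x * y)%g by rewrite c2.
  have m2 : (star y * star x)%g <> (star x * y)%g by rewrite -eA2B4.
  have := E (star x * y)%g; rewrite /gadd /gmul /= !gcoef_cons gcoef_nil => H3.
  simp_eqs H3.
  case: ((y * x)%g =P (star x * y)%g) => [g1|ng1].
    right; right; right; split; try congruence.
    apply/eqP; rewrite -addr_eq0; apply/eqP.
    by apply: (etrans _ H); ring.
  simp_eqs H3.
  case: ((star y * x)%g =P (star x * y)%g) => [g3|ng3]; last first.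
    by simp_eqs H3; exfalso; apply: (sig_neq0 x).
  have k1 : (y * star x)%g <> (star x * star y)%g by rewrite c2.
  have k2 : (star y * x)%g <> (star x * star y)%g by rewrite g3.
  have k3 : (star y * star x)%g <> (star x * star y)%g by rewrite -eA2B4.
  have := E (star x * star y)%g; rewrite /gadd /gmul /= !gcoef_cons gcoef_nil => H4.
  simp_eqs H4.
  case: ((y * x)%g =P (star x * star y)%g) => [g4|ng4]; last first.
    simp_eqs H4; exfalso; apply: (sig_neq0 x); apply: (ucancel y).
    by apply: (etrans _ H4); ring.
  exfalso.
  have hw1 : star (y * star y)%g = (y * star y)%g by rewrite hstarM hstarK.
  have E2 g := anti (gen1 hw1 (hcompat y)) (gen3 hx) g.
  have w1 : (y * star y * x)%g <> (x * (y * star y))%g.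
    rewrite -mulgA g3 mulgA c2 -!mulgA => /mulgI /mulgI h; apply: hy; rewrite -h.
    done.
  have w2 : (y * star y * star x)%g <> (x * (y * star y))%g.
    rewrite -mulgA -eA2B4 mulgA g4 !mulgA => /mulIg /esym; exact: ne14.
  have w3 : (star x * (y * star y))%g <> (x * (y * star y))%g.
    by move/mulIg.
  have := E2 (x * (y * star y))%g; rewrite /gadd /gmul /= !gcoef_cons gcoef_nil => H5.
  simp_eqs H5.
  by apply: two_neq0'; apply: (etrans _ H5); ring.
case: ((star y * x)%g =P (x * y)%g) => [c3|nc3].
  have n3 : (star y * star x)%g <> (x * y)%g by rewrite -c3 => /esym; exact: nB34.
  have := E (x * y)%g; rewrite /gadd /gmul /= !gcoef_cons gcoef_nil => H.
  simp_eqs H.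
  by exfalso; apply: hsy; apply/eqP; rewrite -addr_eq0; apply/eqP; apply: (etrans _ H); ring.
have := E (x * y)%g; rewrite /gadd /gmul /= !gcoef_cons gcoef_nil => H.
simp_eqs H.
case: ((star y * star x)%g =P (x * y)%g) => [c4|nc4]; last first.
  by simp_eqs H; exfalso; apply: one_neq0'.
simp_eqs H.
exfalso.
have hw1 : star (x * y)%g = (x * y)%g by rewrite hstarM.
have hw2 : sigma (x * y)%g = -1.
  by apply/eqP; rewrite -addr_eq0; apply/eqP; rewrite hp; apply: (etrans _ H); ring.
have E2 g := anti (gen2 hw1 hw2 h4) (gen3 hx) g.
have w1 : (x * y * x)%g <> (x * (x * y))%g.
  by rewrite -mulgA => /mulgI.
have w2 : (x * y * star x)%g <> (x * (x * y))%g.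
  by rewrite -mulgA => /mulgI.
have w3 : (star x * (x * y))%g <> (x * (x * y))%g.
  by move/mulIg.
have := E2 (x * (x * y))%g; rewrite /gadd /gmul /= !gcoef_cons gcoef_nil => H5.
simp_eqs H5.
by apply: two_neq0'; apply: (etrans _ H5); ring.
Qed.

End Pf.


Theorem lemma3p6 (R : comNzRingType) (G : groupType)
  (star : G -> G) (sigma : G -> R)
  (* char R <> 2 *)
  (hchar : (2%:R : R) != 0)
  (* star is an involution of G *)
  (hstarM : forall x y : G, star (x * y)%g = (star y * star x)%g)
  (hstarK : forall x : G, star (star x) = x)
  (* sigma : G -> U(R) is a nontrivial group homomorphism *)
  (hsigM : forall x y : G, sigma (x * y)%g = sigma x * sigma y)
  (hsig1 : sigma 1%g = 1)
  (hsigU : forall x : G, exists u : R, sigma x * u = 1)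
  (hsignt : exists x : G, sigma x != 1)
  (* compatibility: x x^* in N *)
  (hcompat : forall x : G, sigma (x * star x)%g = 1)
  (hS : S_anticomm star sigma)
  (x y : G) (hx : ~ Gsym star x) (hy : ~ Gsym star y)
  (hsy : sigma y <> -1) :
  [/\ (x * y)%g = (y * x)%g, (y * x)%g = (star x * star y)%g,
      (star x * star y)%g = (star y * star x)%g,
      2%:R * (1 + sigma (x * y)%g) = 0 & 2%:R * (sigma x + sigma y) = 0]
  \/ [/\ (x * y)%g = (y * star x)%g, (y * star x)%g = (star y * x)%g,
        (star y * x)%g = (star x * star y)%g &
        1 + sigma x + sigma y + sigma (x * y)%g = 0]
  \/ [/\ (x * y)%g = (star x * star y)%g, (star x * star y)%g <> (y * star x)%g,
        (y * star x)%g = (star y * x)%g, sigma (x * y)%g = -1 &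
        sigma x = - sigma y]
  \/ [/\ (x * y)%g = (y * star x)%g, (y * star x)%g <> (star x * star y)%g,
        (star x * star y)%g = (star y * x)%g & sigma x = -1].
Proof.
by apply: main.
Qed.
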